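(* Let $\mathcal{H}$ be a Hilbert space and $A$ a self-adjoint operator on $\mathcal{H}$, semi-bounded below, with compact resolvent. Let $\mathcal{L}\subset\mathrm{D}(A)$ be a finite-dimensional subspace. Let $s,t\notin\mathrm{Spec}(A)$ with $t<s$, and let $u\in\mathcal{L}$ be such that either $\mathfrak{a}^1_t(u,u)<0$ or $\mathfrak{a}^1_s(u,u)>0$. Then \[ t+\frac{\mathfrak{a}^2_t(u,u)}{\mathfrak{a}^1_t(u,u)}\le s+\frac{\mathfrak{a}^2_s(u,u)}{\mathfrak{a}^1_s(u,u)}.\]
   Context: For $r\in\mathbb{R}$ and $u,v\in\mathrm{D}(A)$, $\mathfrak{a}^1_r(u,v)=\langle (A-r)u,v\rangle$ and $\mathfrak{a}^2_r(u,v)=\langle (A-r)u,(A-r)v\rangle$. *)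

(* Defs.v *)
From HB Require Import structures.
From mathcomp Require Import all_boot all_order all_algebra.
From mathcomp Require Import complex.
From mathcomp Require Import reals.
Set Implicit Arguments. Unset Strict Implicit. Unset Printing Implicit Defensive.
Import Order.TTheory GRing.Theory Num.Theory.
Local Open Scope ring_scope.
Local Open Scope complex_scope.

Section Hilbert.
Variable R : realType.
Local Notation C := R[i].
Variable H : lmodType C.
Variable ip : H -> H -> C.   (* inner product, linear in the first argument *)

Definition hnorm (x : H) : R := Num.sqrt (complex.Re (ip x x)).

Definition cauchy_seq (u : nat -> H) : Prop :=
  forall e : R, 0 < e -> exists N : nat,
    forall m n : nat, (N <= m)%N -> (N <= n)%N -> hnorm (u m - u n) < e.

Definition converges_to (u : nat -> H) (l : H) : Prop :=
  forall e : R, 0 < e -> exists N : nat, forall n : nat, (N <= n)%N -> hnorm (u n - l) < e.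

Definition is_hilbert_space : Prop :=
  [/\ (forall (a : C) (x y z : H), ip (a *: x + y) z = a * ip x z + ip y z),
      (forall x y : H, ip y x = (ip x y)^*),
      (forall x : H, 0 <= ip x x),
      (forall x : H, ip x x = 0 -> x = 0)
    & (forall u : nat -> H, cauchy_seq u -> exists l : H, converges_to u l)].

Definition is_subspace (D : H -> Prop) : Prop :=
  D 0 /\ forall (a : C) (x y : H), D x -> D y -> D (a *: x + y).

Definition finite_dim_subspace (L : H -> Prop) : Prop :=
  exists (n : nat) (e : 'I_n -> H),
    forall x : H, L x <-> exists c : 'I_n -> C, x = \sum_(i < n) c i *: e i.

Definition is_operator (D : H -> Prop) (A : H -> H) : Prop :=
  is_subspace D /\
  forall (a : C) (x y : H), D x -> D y -> A (a *: x + y) = a *: A x + A y.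

(* self-adjoint: symmetric and D(A^* ) included in D(A) with A^* = A there *)
Definition self_adjoint (D : H -> Prop) (A : H -> H) : Prop :=
  is_operator D A /\
  (forall u v : H, D u -> D v -> ip (A u) v = ip u (A v)) /\
  (forall v w : H, (forall u : H, D u -> ip (A u) v = ip u w) -> D v /\ A v = w).

Definition semibounded_below (D : H -> Prop) (A : H -> H) : Prop :=
  exists c : R, forall u : H, D u -> c%:C * ip u u <= ip (A u) u.

Definition bounded_linear (B : H -> H) : Prop :=
  (forall (a : C) (x y : H), B (a *: x + y) = a *: B x + B y) /\
  exists M : R, forall x : H, hnorm (B x) <= M * hnorm x.

Definition compact_operator (B : H -> H) : Prop :=
  bounded_linear B /\
  forall x : nat -> H, (exists M : R, forall n, hnorm (x n) <= M) ->
    exists (phi : nat -> nat) (l : H),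
      (forall n, (phi n < phi n.+1)%N) /\ converges_to (fun n => B (x (phi n))) l.

Definition is_resolvent (D : H -> Prop) (A : H -> H) (z : C) (B : H -> H) : Prop :=
  [/\ bounded_linear B,
      (forall f : H, D (B f) /\ A (B f) - z *: B f = f)
    & (forall u : H, D u -> B (A u - z *: u) = u)].

Definition spectrum (D : H -> Prop) (A : H -> H) (z : C) : Prop :=
  ~ exists B : H -> H, is_resolvent D A z B.

Definition compact_resolvent (D : H -> Prop) (A : H -> H) : Prop :=
  exists (z : C) (B : H -> H), is_resolvent D A z B /\ compact_operator B.

Definition form1 (A : H -> H) (r : R) (u v : H) : C := ip (A u - r%:C *: u) v.
Definition form2 (A : H -> H) (r : R) (u v : H) : C :=
  ip (A u - r%:C *: u) (A v - r%:C *: v).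

End Hilbert.

(* Main.v *)
Require Import Defs.
From HB Require Import structures.
From mathcomp Require Import all_boot all_order all_algebra.
From mathcomp Require Import complex.
From mathcomp Require Import reals.
From mathcomp Require Import ring lra.
Import Order.TTheory GRing.Theory Num.Theory.
Local Open Scope ring_scope.
Local Open Scope complex_scope.

Lemma selfconj_real (R : realType) (x : R[i]) : x^* = x -> x = (complex.Re x)%:C.
Proof.
case: x => a b /= [] h; rewrite /real_complex_def /=.
by have -> : b = 0 by lra.
Qed.

Lemma ge0_real (R : realType) (x : R[i]) : 0 <= x -> x = (complex.Re x)%:C.
Proof. by case: x => a b /= /ger0_Im /= ->. Qed.

Lemma ineq_key (R : realType) (a b n s t : R) :
  t < s -> (forall r, 0 <= b - 2 * r * a + r ^+ 2 * n) ->
  (a - t * n < 0 \/ a - s * n > 0) -> 0 <= n ->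
  t + (b - 2 * t * a + t ^+ 2 * n) / (a - t * n)
  <= s + (b - 2 * s * a + s ^+ 2 * n) / (a - s * n).
Proof.
move=> ts hr hs n0.
have cs : a ^+ 2 <= b * n.
  have [nz|np] := eqVneq n 0.
    rewrite nz mulr0.
    have [az|anz] := eqVneq a 0; first by rewrite az expr2 mul0r.
    have := hr ((b + 1) / (2 * a)); rewrite nz mulr0 addr0.
    have -> : 2 * ((b + 1) / (2 * a)) * a = b + 1.
      by field.
    lra.
  have npos : 0 < n by rewrite lt_def np.
  have := hr (a / n).
  have -> : b - 2 * (a / n) * a + (a / n) ^+ 2 * n = (b * n - a ^+ 2) / n.
    by field.
  by rewrite pmulr_lge0 ?invr_gt0 // subr_ge0.
have e1 : forall r, r + (b - 2 * r * a + r ^+ 2 * n) / (a - r * n)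
   = (b - r * a) / (a - r * n) \/ a - r * n = 0.
  move=> r; have [z|nz] := eqVneq (a - r * n) 0; first by right.
  by left; field.
have sgn : (a - t * n) * (a - s * n) > 0.
  case: hs => h.
    have h2 : a - s * n < 0 by nra.
    by rewrite nmulr_rgt0.
  have h2 : a - t * n > 0 by nra.
  by rewrite pmulr_rgt0.
have tz : a - t * n != 0 by apply/eqP => z; rewrite z mul0r ltxx in sgn.
have sz : a - s * n != 0 by apply/eqP => z; rewrite z mulr0 ltxx in sgn.
case: (e1 t) => [->|/eqP]; last by rewrite (negbTE tz).
case: (e1 s) => [->|/eqP]; last by rewrite (negbTE sz).
rewrite -subr_ge0.
have -> : (b - s * a) / (a - s * n) - (b - t * a) / (a - t * n)
  = ((s - t) * (b * n - a ^+ 2)) / ((a - t * n) * (a - s * n)).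
  by field; rewrite tz sz.
apply: divr_ge0; last exact: ltW.
by apply: mulr_ge0; lra.
Qed.

Lemma rcD (R : realType) (x y : R) : (x + y)%:C = x%:C + y%:C :> R[i].
Proof. by rewrite rmorphD. Qed.
Lemma rcM (R : realType) (x y : R) : (x * y)%:C = x%:C * y%:C :> R[i].
Proof. by rewrite rmorphM. Qed.
Lemma rcN (R : realType) (x : R) : (- x)%:C = - x%:C :> R[i].
Proof. by rewrite rmorphN. Qed.
Lemma rcV (R : realType) (x y : R) : (x / y)%:C = x%:C / y%:C :> R[i].
Proof. by rewrite fmorph_div. Qed.

Theorem lemma3p1 (R : realType) (H : lmodType R[i]) (ip : H -> H -> R[i])
  (D : H -> Prop) (A : H -> H) (L : H -> Prop) (s t : R) (u : H) :
  is_hilbert_space ip ->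
  self_adjoint ip D A ->
  semibounded_below ip D A ->
  compact_resolvent ip D A ->
  is_subspace L -> finite_dim_subspace L -> (forall x, L x -> D x) ->
  ~ spectrum ip D A s%:C -> ~ spectrum ip D A t%:C -> t < s ->
  L u ->
  (form1 ip A t u u < 0 \/ form1 ip A s u u > 0) ->
  t%:C + form2 ip A t u u / form1 ip A t u u
    <= s%:C + form2 ip A s u u / form1 ip A s u u.
Proof.
move=> [hlin hsym hpos _ _] [_ [hA _]] _ _ _ _ hLD _ _ ts Lu hs.
have Du := hLD u Lu.
set w := A u.
set a := complex.Re (ip w u).
set n := complex.Re (ip u u).
set b := complex.Re (ip w w).
have ha : ip w u = a%:C.
  apply: selfconj_real; rewrite -hsym; exact: (esym (hA u u Du Du)).
have hn : ip u u = n%:C by apply: ge0_real.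
have hb : ip w w = b%:C by apply: ge0_real.
have hua : ip u w = a%:C by rewrite hsym ha conjc_real.
have ez : forall r : R, w - r%:C *: u = (- r%:C) *: u + w.
  by move=> r; rewrite scaleNr addrC.
have f1 : forall r : R, form1 ip A r u u = (a - r * n)%:C.
  move=> r; rewrite /form1 -/w ez hlin hn ha.
  by rewrite rcD rcN rcM mulNr addrC.
have f2 : forall r : R, form2 ip A r u u = (b - 2 * r * a + r ^+ 2 * n)%:C.
  move=> r; rewrite /form2 -/w ez hlin.
  have e1 : ip u ((- r%:C) *: u + w) = (a - r * n)%:C.
    by rewrite hsym -ez -/w -/(form1 ip A r u u) f1 conjc_real.
  have e2 : ip w ((- r%:C) *: u + w) = (b - r * a)%:C.
    by rewrite hsym hlin hua hb -rcN -rcM -rcD conjc_real mulNr addrC.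
  rewrite e1 e2 -rcN -rcM -rcD; congr (_%:C); ring.
have hr : forall r : R, 0 <= b - 2 * r * a + r ^+ 2 * n.
  move=> r; rewrite -ler0c -f2; exact: hpos.
have n0 : 0 <= n by rewrite -ler0c -hn; exact: hpos.
rewrite !f1 !f2 -!rcV -!rcD lecR.
apply: ineq_key => //.
by case: hs; rewrite !f1 ltcE => /andP[_ h]; [left|right].
Qed.
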